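(* Let $H$ be a real or complex Hilbert space of dimension $n$, let $N\ge n$, let $F=\{f_i\}_{i=1}^N$ be a Parseval frame for $H$, and let $\{q_i\}_{i=1}^N$ be a weight number sequence. The following are equivalent: (i) the canonical dual of $F$ is a 1-erasure probabilistic optimal dual of $F$; (ii) the canonical dual of $F$ is a 1-erasure probabilistic spectrally optimal dual of $F$.
   Context: Inner products are linear in the first argument. A frame $F=\{f_i\}_{i=1}^N$ is Parseval if $\sum_i|\langle f,f_i\rangle|^2=\|f\|^2$ for all $f$; its canonical dual is $\{S_F^{-1}f_i\}=\{f_i\}$, where $S_F=\Theta_F^*\Theta_F$. Analysis operator: $\Theta_Ff=(\langle f,f_i\rangle)_i$. Synthesis operator: $\Theta_G^*(c)=\sum_ic_ig_i$. A dual of $F$ is a frame $G=\{g_i\}_{i=1}^N$ with $f=\sum_i\langle f,f_i\rangle g_i=\sum_i\langle f,g_i\rangle f_i$ for all $f$. A probability sequence satisfies $0\le p_i\le1$ and $\sum p_i=1$. Weight numbers: $q_i=\frac{\sum_jp_j}{\sum_jp_j-p_i}\cdot\frac{N-1}{n}$ (assumed well defined). $\mathcal{D}_1^p$ is the set of $N\times N$ diagonal matrices with exactly one nonzero diagonal entry, equal to $q_i$ at $(i,i)$. Two quantities are used: - $d_1^p(F,G)=\max\{\|\Theta_G^*D\Theta_F\|:D\in\mathcal{D}_1^p\}$ (operator norm); - $\mathcal{R}_1^p(F,G)=\max\{\rho(\Theta_G^*D\Theta_F):D\in\mathcal{D}_1^p\}$ ($\rho$ the spectral radius). $G$ is a 1-erasure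 probabilistic optimal dual of $F$ if $d_1^p(F,G)=\inf\{d_1^p(F,G'):G'\text{ a dual of }F\}$. $G$ is a 1-erasure probabilistic spectrally optimal dual of $F$ if $\mathcal{R}_1^p(F,G)=\inf\{\mathcal{R}_1^p(F,G'):G'\text{ a dual of }F\}$. *)

(* Defs.v *)
From HB Require Import structures.
From mathcomp Require Import all_boot all_order all_algebra.
From mathcomp Require Import complex.
From mathcomp Require Import boolp classical_sets reals.
Set Implicit Arguments. Unset Strict Implicit. Unset Printing Implicit Defensive.
Import Order.TTheory GRing.Theory Num.Theory.
Local Open Scope ring_scope.
Local Open Scope classical_set_scope.

(* Setting: H = K^n with K = R (when real = true) or K = C = R[i]
   (real = false).  Both are modelled inside C^n: when real = true, H is the
   set of vectors with real entries.  Inner product linear in the first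
   argument: <u,v> = sum_k u_k conj(v_k). *)

Section Frames.
Variable R : realType.
Local Notation C := R[i].

Definition cabs (z : C) : R := complex.Re `|z|.

Variable n : nat.

Definition ip (u v : 'cV[C]_n) : C := \sum_k u k 0 * (v k 0)^*.
Definition vnorm (v : 'cV[C]_n) : R := Num.sqrt (\sum_k cabs (v k 0) ^+ 2).

Definition inH (real : bool) (v : 'cV[C]_n) : Prop :=
  real -> forall k, v k 0 \is Num.real.

Variable N : nat.
Implicit Types f g : 'I_N -> 'cV[C]_n.

Definition familyH real f : Prop := forall i, inH real (f i).

(* analysis operator Theta_F f = (<f, f_i>)_i, as an N x n matrix *)
Definition anal f : 'M[C]_(N, n) := \matrix_(i, k) (f i k 0)^*.
(* synthesis operator Theta_G^* c = sum_i c_i g_i, as an n x N matrix *)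
Definition synth g : 'M[C]_(n, N) := \matrix_(k, i) g i k 0.
Definition frame_op f : 'M[C]_n := synth f *m anal f.
Definition cdual f : 'I_N -> 'cV[C]_n := fun i => invmx (frame_op f) *m f i.

Definition is_frame real f : Prop :=
  familyH real f /\
  exists A B : R, 0 < A /\ 0 < B /\
    forall v, inH real v ->
      A * vnorm v ^+ 2 <= \sum_i cabs (ip v (f i)) ^+ 2 <= B * vnorm v ^+ 2.

Definition parseval real f : Prop :=
  familyH real f /\
  forall v, inH real v -> \sum_i cabs (ip v (f i)) ^+ 2 = vnorm v ^+ 2.

Definition is_dual real f g : Prop :=
  is_frame real g /\
  forall v, inH real v ->
    v = \sum_i ip v (f i) *: g i /\ v = \sum_i ip v (g i) *: f i.

Definition prob_seq (p : 'I_N -> R) : Prop :=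
  (forall i, 0 <= p i <= 1) /\ \sum_i p i = 1.

Definition weights (p : 'I_N -> R) (i : 'I_N) : R :=
  (\sum_j p j) / (\sum_j p j - p i) * ((N - 1)%:R / n%:R).

Definition Dmat (q : 'I_N -> R) (i : 'I_N) : 'M[C]_N :=
  \matrix_(j, k) (if (j == i) && (k == i) then ((q i)%:C)%C else 0).

Definition opnorm real (T : 'M[C]_n) : R :=
  sup [set vnorm (T *m v) | v in [set v | inH real v /\ vnorm v = 1]].

Definition specrad (T : 'M[C]_n) : R :=
  sup [set cabs l | l in [set l | eigenvalue T l]].

Definition d1p real q f g : R :=
  \big[Num.max/0]_(i < N) opnorm real (synth g *m Dmat q i *m anal f).

Definition R1p q f g : R :=
  \big[Num.max/0]_(i < N) specrad (synth g *m Dmat q i *m anal f).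

Definition prob_opt_dual real q f g : Prop :=
  is_dual real f g /\ forall g', is_dual real f g' -> d1p real q f g <= d1p real q f g'.

Definition prob_spec_opt_dual real q f g : Prop :=
  is_dual real f g /\ forall g', is_dual real f g' -> R1p q f g <= R1p q f g'.

End Frames.

(* Main.v *)
Require Import Defs.
From HB Require Import structures.
From mathcomp Require Import all_boot all_order all_algebra.
From mathcomp Require Import complex.
From mathcomp Require Import boolp classical_sets reals.
From mathcomp Require Import ring lra.
Import Order.TTheory GRing.Theory Num.Theory.
Local Open Scope ring_scope.

Section Aux.
Variable R : realType.
Local Notation C := R[i].

Lemma normcE (z : C) : `|z| = ((cabs z)%:C)%C.
Proof. by rewrite /cabs normc_def. Qed.

Lemma cabs_ge0 (z : C) : 0 <= cabs z.
Proof. by have := normr_ge0 z; rewrite normcE lecE /= eqxx. Qed.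

Lemma cabsM (z w : C) : cabs (z * w) = cabs z * cabs w.
Proof. by apply: complexI; rewrite rmorphM /= -!normcE normrM. Qed.

Lemma cabsD (z w : C) : cabs (z + w) <= cabs z + cabs w.
Proof. by rewrite -lecR rmorphD /= -!normcE ler_normD. Qed.

Lemma normR (x : R) : `|(x%:C)%C| = (`|x|%:C)%C :> C.
Proof. by rewrite normc_def /= expr0n addr0 sqrtr_sqr. Qed.

Lemma conjE (z : C) : z^* = conjc z.
Proof. by []. Qed.

Lemma conjR (x : R) : ((x%:C)%C)^* = (x%:C)%C :> C.
Proof. by rewrite conjE /= oppr0. Qed.

Lemma cabsR (x : R) : cabs (x%:C)%C = `|x|.
Proof. by apply: complexI; rewrite -normcE normR. Qed.

Lemma cabs0 : cabs (0 : C) = 0.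
Proof. by have := cabsR 0; rewrite normr0. Qed.

Lemma cabsJ (z : C) : cabs (z^*) = cabs z.
Proof. by apply: complexI; rewrite -!normcE norm_conjC. Qed.

Lemma cabs2 (z : C) : ((cabs z ^+ 2)%:C)%C = z * z^*.
Proof. by rewrite rmorphXn /= -normcE normCK. Qed.

Lemma cabs_eq0 (z : C) : (cabs z == 0) = (z == 0).
Proof. by rewrite -[z == 0]normr_eq0 normcE -(inj_eq (@complexI _)). Qed.


Lemma cabs_sum (I : finType) (z : I -> C) : cabs (\sum_i z i) <= \sum_i cabs (z i).
Proof.
rewrite -lecR -normcE rmorph_sum /=.
by apply: le_trans (ler_norm_sum _ _ _) _; apply: ler_sum => i _; rewrite normcE.
Qed.

Lemma rCS (I : finType) (a b : I -> R) :
  (\sum_i a i * b i) ^+ 2 <= (\sum_i a i ^+ 2) * (\sum_i b i ^+ 2).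
Proof.
set A := \sum_i a i ^+ 2; set B := \sum_i b i ^+ 2; set P := \sum_i a i * b i.
have A0 : 0 <= A by apply: sumr_ge0 => i _; exact: sqr_ge0.
have B0 : 0 <= B by apply: sumr_ge0 => i _; exact: sqr_ge0.
have [Ae|Ane] := eqVneq A 0.
  have ai : forall i, a i = 0.
    move=> i; apply/eqP; rewrite -sqrf_eq0; apply/eqP.
    by apply: (psumr_eq0P _ Ae) => // j _; exact: sqr_ge0.
  have -> : P = 0 by rewrite /P big1 // => i _; rewrite ai mul0r.
  by rewrite expr0n /= mulr_ge0.
have Agt : 0 < A by rewrite lt_def Ane A0.
have E : \sum_i (P * a i - A * b i) ^+ 2 = A * (A * B - P ^+ 2).
  transitivity (\sum_i (P ^+ 2 * a i ^+ 2 + (- (2 * P * A)) * (a i * b i) + A ^+ 2 * b i ^+ 2)).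
    by apply: eq_bigr => i _; ring.
  rewrite !big_split /= -!mulr_sumr -/A -/B -/P; ring.
have : 0 <= A * (A * B - P ^+ 2) by rewrite -E; apply: sumr_ge0 => i _; exact: sqr_ge0.
by rewrite pmulr_rge0 // subr_ge0.
Qed.

Lemma CSsum (I : finType) (x y : I -> C) :
  cabs (\sum_i x i * y i) <=
  Num.sqrt (\sum_i cabs (x i) ^+ 2) * Num.sqrt (\sum_i cabs (y i) ^+ 2).
Proof.
apply: le_trans (cabs_sum _ _) _.
under eq_bigr do rewrite cabsM.
rewrite -sqrtrM; last by apply: sumr_ge0 => i _; exact: sqr_ge0.
have P0 : 0 <= \sum_i cabs (x i) * cabs (y i).
  by apply: sumr_ge0 => i _; rewrite mulr_ge0 // cabs_ge0.
rewrite -(ger0_norm P0) -sqrtr_sqr.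
exact/ler_wsqrtr/rCS.
Qed.


Section IP.
Variable n : nat.
Implicit Types u v w : 'cV[C]_n.

Lemma ipDl u w v : ip (u + w) v = ip u v + ip w v.
Proof. by rewrite /ip -big_split; apply: eq_bigr => k _; rewrite mxE mulrDl. Qed.

Lemma ipZl a u v : ip (a *: u) v = a * ip u v.
Proof. by rewrite /ip mulr_sumr; apply: eq_bigr => k _; rewrite mxE mulrA. Qed.

Lemma ipC u v : ip v u = (ip u v)^*.
Proof. by rewrite /ip rmorph_sum; apply: eq_bigr => k _; rewrite rmorphM /= conjCK mulrC. Qed.

Lemma ipDr u v w : ip u (v + w) = ip u v + ip u w.
Proof. by rewrite ipC ipDl rmorphD /= -!ipC. Qed.

Lemma ipZr a u v : ip u (a *: v) = a^* * ip u v.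
Proof. by rewrite ipC ipZl rmorphM /= -ipC. Qed.

Lemma ipBl u w v : ip (u - w) v = ip u v - ip w v.
Proof. by rewrite ipDl -scaleN1r ipZl mulN1r. Qed.

Lemma ipBr u v w : ip u (v - w) = ip u v - ip u w.
Proof. by rewrite ipDr -scaleN1r ipZr rmorphN1 mulN1r. Qed.

Lemma ip_suml (I : finType) (c : I -> C) (w : I -> 'cV[C]_n) v :
  ip (\sum_i c i *: w i) v = \sum_i c i * ip (w i) v.
Proof.
rewrite /ip; under eq_bigr do rewrite summxE mulr_suml.
rewrite exchange_big /=; apply: eq_bigr => i _; rewrite mulr_sumr.
by apply: eq_bigr => k _; rewrite mxE mulrA.
Qed.

Lemma ip_sumr (I : finType) (c : I -> C) (w : I -> 'cV[C]_n) v :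
  ip v (\sum_i c i *: w i) = \sum_i (c i)^* * ip v (w i).
Proof.
rewrite ipC ip_suml rmorph_sum; apply: eq_bigr => i _.
by rewrite rmorphM /= -ipC.
Qed.

Lemma vnorm_ge0 v : 0 <= vnorm v.
Proof. exact: sqrtr_ge0. Qed.

Lemma vnorm2 v : vnorm v ^+ 2 = \sum_k cabs (v k 0) ^+ 2.
Proof. by rewrite sqr_sqrtr //; apply: sumr_ge0 => k _; exact: sqr_ge0. Qed.

Lemma vnorm2C v : ((vnorm v ^+ 2)%:C)%C = ip v v.
Proof. by rewrite vnorm2 rmorph_sum /=; apply: eq_bigr => k _; rewrite cabs2. Qed.

Lemma ReE (z : C) : complex.Re z = complex.Re z. Proof. by []. Qed.

Lemma vnormZ a v : vnorm (a *: v) = cabs a * vnorm v.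
Proof.
rewrite /vnorm -[cabs a](ger0_norm (cabs_ge0 a)) -sqrtr_sqr -sqrtrM ?sqr_ge0 //.
by rewrite mulr_sumr; congr Num.sqrt; apply: eq_bigr => k _; rewrite mxE cabsM exprMn.
Qed.

Lemma CS u v : cabs (ip u v) <= vnorm u * vnorm v.
Proof.
apply: le_trans (CSsum _ _ _) _.
by rewrite /vnorm [X in _ * Num.sqrt X](eq_bigr (fun k => cabs (v k 0) ^+ 2)) // => k _; rewrite cabsJ.
Qed.

Lemma vnorm_eq0 v : vnorm v = 0 -> v = 0.
Proof.
move=> h; have : vnorm v ^+ 2 = 0 by rewrite h expr0n.
rewrite vnorm2 => /psumr_eq0P h2; apply/matrixP => k l.
rewrite (ord1 l) mxE; apply/eqP; rewrite -cabs_eq0 -sqrf_eq0; apply/eqP.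
by apply: h2 => // j _; exact: sqr_ge0.
Qed.

End IP.

Lemma sup_eq (E : set R) x : E x -> (forall y, E y -> y <= x) -> sup E = x.
Proof.
move=> Ex ub; apply/le_anti/andP; split.
  by apply: ge_sup; [exists x | move=> y /ub].
by apply: sup_upper_bound => //; split; [exists x | exists x => y /ub].
Qed.

Section Ops.
Variables (n N : nat) (f g : 'I_N -> 'cV[C]_n) (q : 'I_N -> R) (i : 'I_N).
Local Notation T := (synth g *m Dmat q i *m anal f).

Lemma Tentry k m : T k m = g i k 0 * ((q i)%:C)%C * (f i m 0)^*.
Proof.
rewrite mxE (bigD1 i) //= big1 => [|j /negbTE ji]; last first.
  rewrite mxE (bigD1 i) //= big1 => [|l /negbTE li]; last by rewrite !mxE li mulr0.
  by rewrite !mxE eqxx ji /= mulr0 add0r mul0r.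
rewrite addr0 !mxE (bigD1 i) //= big1 => [|l /negbTE li]; last by rewrite !mxE li mulr0.
by rewrite !mxE !eqxx /= addr0.
Qed.

Lemma Tv v : T *m v = (((q i)%:C)%C * ip v (f i)) *: g i.
Proof.
apply/matrixP => k l; rewrite (ord1 l) !mxE /ip mulr_sumr mulr_suml.
by apply: eq_bigr => m _; rewrite Tentry; ring.
Qed.

Definition adj (v : 'cV[C]_n) : 'rV[C]_n := \row_k (v k 0)^*.

Lemma wT (w : 'rV[C]_n) : w *m T = (((q i)%:C)%C * (w *m g i) 0 0) *: adj (f i).
Proof.
apply/matrixP => l m; rewrite (ord1 l) !mxE mulr_sumr mulr_suml.
by apply: eq_bigr => k _; rewrite Tentry; ring.
Qed.

Lemma adjg : (adj (f i) *m g i) 0 0 = ip (g i) (f i).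
Proof. by rewrite mxE /ip; apply: eq_bigr => k _; rewrite mxE mulrC. Qed.

Hypothesis n0 : (0 < n)%N.
Hypothesis q0 : 0 <= q i.

Lemma ip0r (v : 'cV[C]_n) : ip v 0 = 0.
Proof. by rewrite /ip big1 // => k _; rewrite mxE rmorph0 mulr0. Qed.

Lemma specradE : specrad T = q i * cabs (ip (g i) (f i)).
Proof.
have ub : forall l, eigenvalue T l -> cabs l <= q i * cabs (ip (g i) (f i)).
  move=> l /eigenvalueP [w wTl wn0].
  have [->|ln0] := eqVneq l 0.
    by rewrite cabs0 mulr_ge0 ?cabs_ge0.
  set s := (w *m g i) 0 0.
  have sn0 : s != 0.
    apply: contraNneq wn0 => s0; have := wTl; rewrite wT -/s s0 mulr0 scale0r.
    by move/esym/eqP; rewrite scaler_eq0 (negbTE ln0).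
  have wE : w = (l^-1 * ((q i)%:C%C * s)) *: adj (f i).
    by rewrite -scalerA -wT wTl scalerA mulVf // scale1r.
  have : s = (l^-1 * ((q i)%:C%C * s)) * ip (g i) (f i).
    by rewrite {1}/s {1}wE -scalemxAl mxE adjg.
  move=> /(congr1 (fun x => x * s^-1 * l)); rewrite divff // mul1r => ->.
  have -> : l ^-1 * ((q i)%:C%C * s) * ip (g i) (f i) / s * l = (q i)%:C%C * ip (g i) (f i).
    by field; apply/andP.
  by rewrite cabsM cabsR ger0_norm.
apply: sup_eq => [|y [l /= el <-]]; last exact: ub.
have [f0|fn0] := eqVneq (f i) 0.
  have [l el] := eigenvalue_closed T n0.
  exists l => //; apply/le_anti; rewrite ub //= f0 ip0r.
  by rewrite cabs0 mulr0 cabs_ge0.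
exists ((q i)%:C%C * ip (g i) (f i)); last by rewrite cabsM cabsR ger0_norm.
apply/eigenvalueP; exists (adj (f i)); first by rewrite wT adjg.
apply/eqP => /matrixP a0; move/eqP: fn0; apply; apply/matrixP => k l.
by have := a0 0 k; rewrite (ord1 l) !mxE => /eqP; rewrite conjC_eq0 => /eqP.
Qed.

Lemma realC (x : R) : ((x%:C)%C : C) \is Num.real.
Proof. by rewrite realE !lecE /= eqxx /= le_total. Qed.

Lemma vnorm0 : vnorm (0 : 'cV[C]_n) = 0.
Proof. by rewrite -(scale0r 0) vnormZ cabs0 mul0r. Qed.

Definition e0 : 'cV[C]_n := delta_mx (Ordinal n0) 0.

Lemma e0H real : inH real e0.
Proof. by move=> _ k; rewrite mxE; case: (_ && _); rewrite ?real1 ?real0. Qed.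

Lemma vnorm_e0 : vnorm e0 = 1.
Proof.
rewrite /vnorm (bigD1 (Ordinal n0)) //= big1 => [|k /negbTE kn].
  by rewrite !mxE !eqxx /= addr0 (_ : cabs 1 = 1) ?expr1n ?sqrtr1 // -(rmorph1 (real_complex R)) cabsR normr1.
by rewrite !mxE kn /= cabs0 expr0n.
Qed.

Lemma opnormE real : inH real (f i) ->
  opnorm real T = q i * vnorm (f i) * vnorm (g i).
Proof.
move=> fH; apply: sup_eq => [|y [v /= [vH v1] <-]]; last first.
  rewrite Tv vnormZ cabsM cabsR ger0_norm //.
  rewrite ler_wpM2r ?vnorm_ge0 // ler_wpM2l //.
  by have := @CS _ v (f i); rewrite v1 mul1r.
have [f0|fn0] := eqVneq (f i) 0.
  exists e0; first by split; [exact: e0H | exact: vnorm_e0].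
  by rewrite Tv f0 ip0r vnorm0 mulr0 scale0r vnorm0 mulr0 mul0r.
have a0 : 0 < vnorm (f i).
  rewrite lt_def vnorm_ge0 andbT; apply/eqP => /vnorm_eq0; exact/eqP.
set a := vnorm (f i).
have aE : cabs ((a^-1)%:C%C) = a^-1 by rewrite cabsR ger0_norm // invr_ge0 ltW.
exists ((a^-1)%:C%C *: f i).
  split; first by move=> rl k; rewrite mxE rpredM ?realC //; exact: fH.
  by rewrite vnormZ aE mulVf // gt_eqF.
rewrite Tv vnormZ cabsM cabsR ger0_norm // ipZl -vnorm2C cabsM aE cabsR.
by rewrite ger0_norm ?exprn_ge0 ?vnorm_ge0 // -/a mulrA; congr (_ * _); field; rewrite gt_eqF.
Qed.

End Ops.

Section Parseval.
Variables (n N : nat) (f : 'I_N -> 'cV[C]_n).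

Definition Bf (u w : 'cV[C]_n) := \sum_i ip u (f i) * (ip w (f i))^* - ip u w.

Lemma BfE u w c : Bf (u + c *: w) (u + c *: w) =
  Bf u u + c^* * Bf u w + c * Bf w u + c * c^* * Bf w w.
Proof.
rewrite /Bf !ipDl !ipDr !ipZl !ipZr.
rewrite (eq_bigr (fun i => ip u (f i) * (ip u (f i))^* + c^* * (ip u (f i) * (ip w (f i))^*)
   + c * (ip w (f i) * (ip u (f i))^*) + c * c^* * (ip w (f i) * (ip w (f i))^*))); last first.
  by move=> i _; rewrite ipDl ipZl rmorphD rmorphM /=; ring.
rewrite !big_split /= -!mulr_sumr; ring.
Qed.

Lemma BfC u w : Bf w u = (Bf u w)^*.
Proof.
rewrite /Bf rmorphB rmorph_sum /= -ipC; congr (_ - _); apply: eq_bigr => i _.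
by rewrite rmorphM /= conjCK mulrC.
Qed.

Definition ev (k : 'I_n) : 'cV[C]_n := delta_mx k 0.

Lemma ip_ev k v : ip (ev k) v = (v k 0)^*.
Proof.
rewrite /ip (bigD1 k) //= big1 => [|j /negbTE jk]; first by rewrite !mxE !eqxx mul1r addr0.
by rewrite !mxE jk mul0r.
Qed.

Lemma Bf_ev l k : Bf (ev l) (ev k) = frame_op f k l - (k == l)%:R.
Proof.
rewrite /Bf ip_ev !mxE eq_sym; congr (_ - _); last first.
  by rewrite eqxx andbT rmorph_nat.
by apply: eq_bigr => i _; rewrite !ip_ev !mxE conjCK mulrC.
Qed.

Lemma parseval_S real : parseval real f -> frame_op f = 1%:M.
Proof.
move=> [fH P].
have B0 : forall v, inH real v -> Bf v v = 0.
  move=> v vH; apply/eqP; rewrite subr_eq0; apply/eqP.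
  rewrite -vnorm2C -(P v vH) rmorph_sum; apply: eq_bigr => i _.
  by rewrite -cabs2.
have evH : forall l k (c : C), c \is Num.real -> inH real (ev l + c *: ev k).
  by move=> l k c cr _ j; rewrite !mxE rpredD ?rpredM //; case: (_ && _); rewrite ?real1 ?real0.
have key : forall l k, Bf (ev l) (ev k) = 0.
  move=> l k.
  have Bll : forall l, Bf (ev l) (ev l) = 0.
    by move=> j; apply: B0; move: (evH j j 0 (real0 _)); rewrite scale0r addr0.
  have h1 := B0 _ (evH l k 1 (real1 _)).
  rewrite BfE !Bll in h1.
  move: h1; rewrite conjC1 !mul1r addr0 add0r [Bf (ev k) (ev l)]BfC => h1.
  have hc : (Bf (ev l) (ev k))^* = Bf (ev l) (ev k).
    case: real fH P B0 evH => fH P B0 evH.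
      apply/conj_Creal; rewrite Bf_ev !mxE rpredB ?rpred_nat // rpred_sum // => i _.
      by rewrite !mxE rpredM ?(fH i isT) // CrealJ (fH i isT).
    have h2 : Bf (ev l + 'i *: ev k) (ev l + 'i *: ev k) = 0 by apply: B0.
    rewrite BfE !Bll !mulr0 addr0 add0r in h2.
    rewrite [Bf (ev k) (ev l)]BfC conjCi in h2.
    have : 'i * ((Bf (ev l) (ev k))^* - Bf (ev l) (ev k)) = - 'i * Bf (ev l) (ev k) + 'i * (Bf (ev l) (ev k))^* by ring.
    rewrite h2.
    by move/eqP; rewrite mulf_eq0 (negbTE (neq0Ci _)) /= subr_eq0 => /eqP.
  move: h1; rewrite hc -mulr2n => /eqP; rewrite mulrn_eq0 /= => /eqP //.
apply/matrixP => k l; move: (key l k); rewrite Bf_ev => /eqP; rewrite subr_eq0 => /eqP ->.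
by rewrite !mxE.
Qed.

End Parseval.

Lemma ReD (z w : C) : complex.Re (z + w) = complex.Re z + complex.Re w.
Proof. by case: z; case: w. Qed.
Lemma ReN (z : C) : complex.Re (- z) = - complex.Re z.
Proof. by case: z. Qed.
Lemma ReMR (x : R) (z : C) : complex.Re ((x%:C)%C * z) = x * complex.Re z.
Proof. by case: z => a b /=; rewrite mul0r subr0. Qed.
Lemma ReJ (z : C) : complex.Re (z^*) = complex.Re z.
Proof. by case: z. Qed.
Lemma Re_le (z : C) : complex.Re z <= cabs z.
Proof.
case: z => a b; rewrite /cabs normc_def /=.
apply: le_trans (ler_norm a) _; rewrite -sqrtr_sqr ler_wsqrtr //.
by rewrite lerDl sqr_ge0.
Qed.
Lemma vnorm2Re n (v : 'cV[C]_n) : vnorm v ^+ 2 = complex.Re (ip v v).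
Proof. by rewrite -vnorm2C. Qed.

Lemma vnorm_expand n (u w : 'cV[C]_n) (t : R) :
  vnorm (u + (t%:C)%C *: w) ^+ 2 =
  vnorm u ^+ 2 + 2 * t * complex.Re (ip w u) + t ^+ 2 * vnorm w ^+ 2.
Proof.
rewrite !vnorm2Re ipDl !ipDr !ipZl !ipZr conjR [ip u w]ipC.
rewrite !ReD (ReMR t (ip w u)) (ReMR t ((ip w u)^*)) (ReMR t (_ * ip w w)) (ReMR t (ip w w)) ReJ; ring.
Qed.

Section Dual.
Variables (n N : nat) (real : bool) (f : 'I_N -> 'cV[C]_n).
Hypothesis hpar : parseval real f.

Lemma cdualE : cdual f = f.
Proof.
apply: funext => i; by rewrite /cdual (@parseval_S _ _ _ _ hpar) invmx1 mul1mx.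
Qed.

Lemma dual_frame (g : 'I_N -> 'cV[C]_n) : familyH real g ->
  (forall v, inH real v -> v = \sum_i ip v (g i) *: f i) -> is_frame real g.
Proof.
move=> gH rec; split => //.
exists 1, (1 + \sum_i vnorm (g i) ^+ 2); split => //; split.
  by rewrite ltr_wpDr ?ltr01 // sumr_ge0 // => i _; exact: sqr_ge0.
move=> v vH; apply/andP; split.
  set X := \sum_i cabs (ip v (g i)) ^+ 2.
  have X0 : 0 <= X by apply: sumr_ge0 => i _; exact: sqr_ge0.
  have h : vnorm v ^+ 2 <= Num.sqrt X * vnorm v.
    have -> : vnorm v ^+ 2 = cabs (ip v v).
      by rewrite -vnorm2C cabsR ger0_norm // exprn_ge0 // vnorm_ge0.
    rewrite {2}(rec v vH) ip_sumr.
    apply: le_trans (CSsum _ _ _) _.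
    rewrite /X; under eq_bigr do rewrite cabsJ.
    by rewrite (proj2 hpar v vH) sqrtr_sqr ger0_norm // vnorm_ge0.
  have s0 := sqrtr_ge0 X; have a0 := @vnorm_ge0 _ v.
  rewrite mul1r -(sqr_sqrtr X0); nra.
rewrite mulrDl mul1r ler_wpDl ?exprn_ge0 ?vnorm_ge0 // mulr_suml.
apply: ler_sum => i _; rewrite -exprMn mulrC ler_pXn2r ?nnegrE ?cabs_ge0 ?mulr_ge0 ?vnorm_ge0 //.
exact: CS.
Qed.

Lemma dual_comb (g : 'I_N -> 'cV[C]_n) (t : R) :
  is_dual real f f -> is_dual real f g ->
  is_dual real f (fun i => f i + (t%:C)%C *: (g i - f i)).
Proof.
move=> [_ hf] [[gH _] hg].
have rec2 : forall v, inH real v ->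
    v = \sum_i ip v (f i + (t%:C)%C *: (g i - f i)) *: f i.
  move=> v vH.
  rewrite (eq_bigr (fun i => ip v (f i) *: f i + (t%:C)%C *: (ip v (g i) *: f i - ip v (f i) *: f i))); last first.
    by move=> i _; rewrite ipDr ipZr ipBr conjR scalerDl mulrBr scalerBl scalerBr !scalerA.
  rewrite big_split /= -scaler_sumr sumrB -(proj2 (hf v vH)) -(proj2 (hg v vH)).
  by rewrite subrr scaler0 addr0.
have gtH : familyH real (fun i => f i + (t%:C)%C *: (g i - f i)).
  move=> i rl k; have fR := proj1 hpar.
  by rewrite !mxE rpredD ?rpredM ?rpredB ?realC ?(fR i rl k) ?(gH i rl k).
split; first exact: dual_frame.
move=> v vH; split; last exact: rec2.
rewrite (eq_bigr (fun i => ip v (f i) *: f i + (t%:C)%C *: (ip v (f i) *: g i - ip v (f i) *: f i))); last first.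
  by move=> i _; rewrite scalerDr; congr (_ + _); rewrite scalerA mulrC -scalerA scalerBr.
rewrite big_split /= -scaler_sumr sumrB -(proj1 (hf v vH)) -(proj1 (hg v vH)).
by rewrite subrr scaler0 addr0.
Qed.

End Dual.

Lemma key_ineq (q a K c D M L t E w : R) :
  0 <= q -> 0 <= a -> q * a ^+ 2 <= M -> q * (c + a ^+ 2) <= D -> 0 <= D -> D < M ->
  0 <= K -> q ^+ 2 * a ^+ 2 * K <= L -> E = M * (M - D) -> 0 < t -> 2 * t <= 1 ->
  t * L < 2 * E -> 0 <= w -> w ^+ 2 = a ^+ 2 + 2 * t * c + t ^+ 2 * K ->
  q * a * w < M.
Proof.
move=> q0 a0 XM YD D0 DM K0 KL EE t0 t1 tL w0 wE.
set X := q * a ^+ 2.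
have X0 : 0 <= X by rewrite mulr_ge0 // sqr_ge0.
have M0 : 0 < M by apply: le_lt_trans DM.
have Z : (q * a * w) ^+ 2 = X ^+ 2 * (1 - 2 * t) + 2 * t * X * (q * (c + a ^+ 2)) + t ^+ 2 * (q ^+ 2 * a ^+ 2 * K).
  by rewrite exprMn wE /X; ring.
have h1 : X ^+ 2 * (1 - 2 * t) <= M ^+ 2 * (1 - 2 * t).
  by apply: ler_wpM2r; [rewrite subr_ge0 | rewrite ler_pXn2r ?nnegrE // ltW].
have h2 : X * (q * (c + a ^+ 2)) <= M * D.
  by apply: le_trans (_ : X * D <= M * D); [rewrite ler_wpM2l | rewrite ler_wpM2r].
have h3 : t ^+ 2 * (q ^+ 2 * a ^+ 2 * K) <= t ^+ 2 * L by rewrite ler_wpM2l ?sqr_ge0.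
have h4 : t * (t * L) < t * (2 * E) by rewrite ltr_pM2l.
have hZ : (q * a * w) ^+ 2 < M ^+ 2.
  rewrite Z; have -> : M ^+ 2 = M ^+ 2 * (1 - 2 * t) + 2 * t * (M * D) + t * (2 * E) by rewrite EE; ring.
  have : 2 * t * X * (q * (c + a ^+ 2)) <= 2 * t * (M * D).
    by rewrite -mulrA ler_wpM2l // mulr_ge0 // ltW.
  move: h1 h3 h4; rewrite !expr2 => h1 h3 h4 h5; lra.
have p0 : 0 <= q * a * w by rewrite !mulr_ge0.
by move: hZ; rewrite ltr_pXn2r ?nnegrE // ltW.
Qed.

End Aux.

Section Main.
Variable R : realType.
Local Notation C := R[i].

Theorem main (real : bool) (n N : nat)
    (f : 'I_N -> 'cV[R[i]]_n) (p : 'I_N -> R) :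
  (0 < n)%N -> (n <= N)%N ->
  parseval real f ->
  prob_seq p ->
  (forall i, \sum_j p j - p i != 0) ->
  (prob_opt_dual real (weights n p) f (cdual f) <->
   prob_spec_opt_dual real (weights n p) f (cdual f)).
Proof.
move=> n0 nN hpar [p01 p1] hpn.
set q := weights n p.
have q0 : forall i, 0 <= q i.
  move=> i; rewrite /q /weights p1 mulr_ge0 // ?divr_ge0 //.
    by rewrite subr_ge0; case/andP: (p01 i).
have fH := proj1 hpar.
rewrite (@cdualE _ _ _ _ _ hpar).
have dE : forall g, d1p real q f g = \big[Num.max/0]_i (q i * vnorm (f i) * vnorm (g i)).
  by move=> g; apply: eq_bigr => i _; apply: opnormE.
have rE : forall g, R1p q f g = \big[Num.max/0]_i (q i * cabs (ip (g i) (f i))).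
  by move=> g; apply: eq_bigr => i _; apply: specradE.
have ffE : forall i, cabs (ip (f i) (f i)) = vnorm (f i) * vnorm (f i).
  by move=> i; rewrite -vnorm2C cabsR ger0_norm ?expr2 // mulr_ge0 ?vnorm_ge0.
have dRF : d1p real q f f = R1p q f f.
  by rewrite dE rE; apply: eq_bigr => i _; rewrite ffE mulrA.
have Rd : forall g, R1p q f g <= d1p real q f g.
  move=> g; rewrite rE dE; apply: bigmax_le => [|i _].
    exact: bigmax_ge_id.
  apply: le_trans (le_bigmax _ _ i); rewrite -mulrA ler_wpM2l // mulrC.
  exact: CS.
split.
  move=> [hd hopt]; split; first exact: hd. move=> g hg.
  case: (lerP (R1p q f f) (R1p q f g)) => [h|lt]; first exact: isT.
  exfalso.
  move: lt; set M := R1p q f f; set D := R1p q f g => lt.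
  have hD : forall i, q i * cabs (ip (g i) (f i)) <= D.
    by move=> i; rewrite /D rE; exact: (le_bigmax _ (fun i => q i * cabs (ip (g i) (f i))) i).
  have hM : forall i, q i * vnorm (f i) ^+ 2 <= M.
    move=> i; rewrite /M rE; apply: le_trans (le_bigmax _ (fun i => q i * cabs (ip (f i) (f i))) i).
    by rewrite ffE expr2 lexx.
  have D0 : 0 <= D by rewrite /D rE; exact: bigmax_ge_id.
  have M0 : 0 < M by apply: le_lt_trans lt.
  pose h := fun i => g i - f i.
  pose K := fun i => vnorm (h i) ^+ 2.
  pose L := \sum_i (q i ^+ 2 * vnorm (f i) ^+ 2 * K i).
  have KL : forall i, q i ^+ 2 * vnorm (f i) ^+ 2 * K i <= L.
    move=> i; rewrite /L (bigD1 i) /=; last exact: isT.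
    rewrite lerDl; apply: sumr_ge0 => j _.
    by apply: mulr_ge0; [apply: mulr_ge0|]; apply: sqr_ge0.
  have L0 : 0 <= L by apply: sumr_ge0 => j _; apply: mulr_ge0; [apply: mulr_ge0|]; apply: sqr_ge0.
  pose E := M * (M - D).
  have E0 : 0 < E by apply: mulr_gt0; [exact: M0 | rewrite subr_gt0; exact: lt].
  pose den := L + 2 * E.
  have den0 : 0 < den by apply: ltr_wpDl; [exact: L0 | apply: mulr_gt0; [exact: ltr0Sn | exact: E0]].
  pose t := E / den.
  have t0 : 0 < t by apply: divr_gt0; [exact: E0 | exact: den0].
  have tden : t * den = E by rewrite /t divfK; last exact: (negbT (gt_eqF den0)).
  have e1 : t * L + 2 * (t * E) = E by rewrite -[RHS]tden /den; ring.
  have tE0 : 0 < t * E by apply: mulr_gt0; [exact: t0 | exact: E0].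
  have tL : t * L < 2 * E by lra.
  have t1 : 2 * t <= 1.
    rewrite -(ler_pM2r den0) mul1r -mulrA tden /den; lra.
  pose gt := fun i => f i + (t%:C)%C *: h i.
  have hgt : is_dual real f gt by apply: dual_comb.
  have c1 := hopt gt hgt.
  rewrite dRF -/M in c1.
  have c2 : d1p real q f gt < M.
    rewrite dE; apply: bigmax_lt => [|i _]; first exact: M0.
    apply: (@key_ineq R (q i) (vnorm (f i)) (K i) (complex.Re (ip (h i) (f i))) D M L t E (vnorm (gt i))).
    - exact: q0.
    - exact: vnorm_ge0.
    - exact: hM.
    - rewrite /h /= ipBl ReD ReN -vnorm2Re subrK.
      apply: le_trans (hD i); apply: ler_wpM2l; [exact: q0 | exact: Re_le].
    - exact: D0.
    - exact: lt.
    - exact: sqr_ge0.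
    - exact: KL.
    - exact: erefl.
    - exact: t0.
    - exact: t1.
    - exact: tL.
    - exact: vnorm_ge0.
    - exact: vnorm_expand.
  by have := le_lt_trans c1 c2; rewrite ltxx.
move=> [hd hopt]; split; first exact: hd.
move=> g hg; rewrite dRF; exact: le_trans (hopt g hg) (Rd g).
Qed.

End Main.

Theorem theorem4p2 (R : realType) (real : bool) (n N : nat)
    (f : 'I_N -> 'cV[R[i]]_n) (p : 'I_N -> R) :
  (0 < n)%N -> (n <= N)%N ->
  parseval real f ->
  prob_seq p ->
  (forall i, \sum_j p j - p i != 0) ->
  (prob_opt_dual real (weights n p) f (cdual f) <->
   prob_spec_opt_dual real (weights n p) f (cdual f)).
Proof. exact: (@main R real n N f p). Qed.
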